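(* Let $R$ be a left coherent ring and $M\in R\text{-}\mathbf{Mod}$. Then (1) $\ker(\mathrm{Defect})\subseteq\ker(\mathrm{ev}_M)$ if and only if $M$ is fp-injective; (2) $\ker(\mathrm{Defect})=\ker(\mathrm{ev}_M)$ if and only if $M$ is fp-injective and an fp-cogenerator.
   Context: $R$ is left coherent if every finitely generated left ideal is finitely presented; then $R\text{-}\mathbf{mod}$ (finitely presented left modules) is abelian. $R\text{-}\mathbf{mod}\text{-}\mathbf{mod}$ is the abelian category of finitely presented additive functors $\mathcal G:R\text{-}\mathbf{mod}\to\mathbf{Ab}$ (with a presentation $\operatorname{Hom}(N',-)\xrightarrow{\operatorname{Hom}(\alpha,-)}\operatorname{Hom}(N,-)\to\mathcal G\to0$, $\alpha:N\to N'$ in $R\text{-}\mathbf{mod}$); $\mathrm{Defect}(\mathcal G):=\ker(\alpha)$, and $\ker(\mathrm{Defect})$ is the full subcategory of $\mathcal G$ with $\mathrm{Defect}(\mathcal G)=0$. Each $\mathcal G$ is identified with its extension to all left modules commuting with filtered colimits; $\mathrm{ev}_M(\mathcal G)=\mathcal G(M)$, and $\ker(\mathrm{ev}_M)$ is the full subcategory of $\mathcal G$ with $\mathcal G(M)=0$. $M$ is fp-injective if $\operatorname{Ext}^1(N,M)=0$ for all finitely presented left modules $N$; $M$ is an fp-cogenerator if $\operatorname{Hom}(-,M):(R\text{-}\mathbf{mod})^{\mathrm{op}}\to\mathbf{Ab}$ is faithful. *)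

(* Defs.v *)
From HB Require Import structures.
From mathcomp Require Import all_boot all_algebra.
Set Implicit Arguments. Unset Strict Implicit. Unset Printing Implicit Defensive.
Import GRing.Theory.
Local Open Scope ring_scope.

(* Left R-modules are [lmodType R]; R-linear maps are [{linear U -> V}].
   The free module R^n is the row space ['rV[R]_n] (left scalar action). *)

Definition fin_presented (R : nzRingType) (N : lmodType R) : Prop :=
  exists (m n : nat) (q : {linear 'rV[R]_m -> 'rV[R]_n})
         (p : {linear 'rV[R]_n -> N}),
    (forall x : N, exists y, p y = x) /\
    (forall y, p y = 0 <-> exists z, q z = y).

(** Left coherence: every finitely generated left ideal I = R a_1 + ... + R a_n
    of R is finitely presented, i.e. isomorphic (via an injective linear map
    into the regular module R^o with image I) to a finitely presented module. *)
Definition left_coherent (R : nzRingType) : Prop :=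
  forall (n : nat) (a : 'I_n -> R),
    exists (V : lmodType R) (j : {linear V -> R^o}),
      injective j /\
      (forall x : R, (exists v, j v = x) <->
                     exists r : 'I_n -> R, x = \sum_(i < n) r i * a i) /\
      fin_presented V.

(** Ext^1(N, M) = 0, with Ext^1 in its Yoneda description: every short exact
    sequence 0 -> M -> E -> N -> 0 of left R-modules splits. *)
Definition Ext1_zero (R : nzRingType) (N M : lmodType R) : Prop :=
  forall (E : lmodType R) (i : {linear M -> E}) (p : {linear E -> N}),
    injective i ->
    (forall x : N, exists e, p e = x) ->
    (forall e, p e = 0 <-> exists m, i m = e) ->
    exists r : {linear E -> M}, forall m, r (i m) = m.

Definition fp_injective (R : nzRingType) (M : lmodType R) : Prop :=
  forall N : lmodType R, fin_presented N -> Ext1_zero N M.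

Definition fp_cogenerator (R : nzRingType) (M : lmodType R) : Prop :=
  forall (N N' : lmodType R), fin_presented N -> fin_presented N' ->
  forall f f' : {linear N -> N'},
    (forall g : {linear N' -> M}, forall x, g (f x) = g (f' x)) ->
    forall x, f x = f' x.

(** A finitely presented functor G : R-mod -> Ab, given by a presentation
    Hom(N', -) --Hom(alpha,-)--> Hom(N, -) --> G --> 0 with alpha : N -> N'
    in R-mod.  Every object of R-mod-mod arises this way. *)
Record fp_functor (R : nzRingType) := FpFunctor {
  fpf_src : lmodType R;
  fpf_tgt : lmodType R;
  fpf_src_fp : fin_presented fpf_src;
  fpf_tgt_fp : fin_presented fpf_tgt;
  fpf_alpha : {linear fpf_src -> fpf_tgt}
}.

(** Defect(G) = ker(alpha); Defect(G) = 0 means alpha is a monomorphism. *)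
Definition defect_zero (R : nzRingType) (G : fp_functor R) : Prop :=
  forall x, fpf_alpha G x = 0 -> x = 0.

(** G(M) for an arbitrary module M, G extended so as to commute with filtered
    colimits: G(M) = coker(Hom(N', M) -> Hom(N, M)).  G(M) = 0 means every
    map N -> M factors through alpha. *)
Definition ev_zero (R : nzRingType) (G : fp_functor R) (M : lmodType R) : Prop :=
  forall f : {linear fpf_src G -> M},
    exists g : {linear fpf_tgt G -> M}, forall x, f x = g (fpf_alpha G x).

(* Main.v *)
From HB Require Import structures.
From mathcomp Require Import all_boot all_algebra.
From Stdlib Require Import ClassicalEpsilon FunctionalExtensionality PropExtensionality.
Require Import Defs.
Set Implicit Arguments. Unset Strict Implicit. Unset Printing Implicit Defensive.
Import GRing.Theory.
Local Open Scope ring_scope.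

Section Mklin.
Variables (R : nzRingType) (U V : lmodType R) (f : U -> V) (H : linear f).
Definition mklin : {linear U -> V} := HB.pack f (GRing.isLinear.Build R U V *:%R f H).
Lemma mklinE x : mklin x = f x. Proof. by []. Qed.
End Mklin.

Record submod (R : nzRingType) (V : lmodType R) := Submod {
  sm_pred : V -> Prop;
  sm0 : sm_pred 0;
  smD : forall x y, sm_pred x -> sm_pred y -> sm_pred (x + y);
  smZ : forall (a : R) x, sm_pred x -> sm_pred (a *: x) }.

Section Quot.
Variables (R : nzRingType) (V : lmodType R) (P : submod V).
Local Notation S := (sm_pred P).
Let S0 : S 0 := sm0 P.
Let SD : forall x y, S x -> S y -> S (x + y) := @smD _ _ P.
Let SZ : forall (a : R) x, S x -> S (a *: x) := @smZ _ _ P.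

Lemma SN x : S x -> S (- x).
Proof. by move=> Sx; rewrite -scaleN1r; apply: SZ. Qed.
Lemma SB x y : S x -> S y -> S (x - y).
Proof. by move=> Sx Sy; apply: SD => //; apply: SN. Qed.

Definition canon (v : V) : V := epsilon (inhabits 0) (fun w => S (w - v)).

Lemma canonP v : S (canon v - v).
Proof. by rewrite /canon; apply: (epsilon_spec (inhabits 0) (fun w => S (w - v))); exists v; rewrite subrr. Qed.

Lemma canon_eq v w : S (v - w) -> canon v = canon w.
Proof.
move=> Svw; rewrite /canon; congr epsilon; apply: functional_extensionality => u.
apply: propositional_extensionality; split => Su.
- have -> : u - w = (u - v) + (v - w) by rewrite addrA subrK.
  by apply: SD.
- have -> : u - v = (u - w) - (v - w) by rewrite opprB addrA subrK.
  by apply: SB.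
Qed.

Lemma canon_id v : canon (canon v) = canon v.
Proof. by apply: canon_eq; apply: canonP. Qed.

Definition quot := {v : V | canon v == v}.
HB.instance Definition _ := Choice.copy (quot) {v : V | canon v == v}.

Definition mkq (v : V) : quot := exist _ (canon v) (introT eqP (canon_id v)).

Lemma mkq_eq v w : S (v - w) -> mkq v = mkq w.
Proof. by move=> h; apply: val_inj; rewrite /= (canon_eq h). Qed.

Lemma mkq_eqP v w : mkq v = mkq w -> S (v - w).
Proof.
move=> /(congr1 val) /= e.
have -> : v - w = (v - canon v) + (canon w - w) by rewrite e addrA subrK.
apply: SD; last exact: canonP.
by rewrite -opprB; apply: SN; apply: canonP.
Qed.

Lemma mkq_val x : mkq (val x) = x.
Proof. by apply: val_inj => /=; apply/eqP; case: x. Qed.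

Lemma val_mkq_S v : S (val (mkq v) - v).
Proof. exact: canonP. Qed.

Definition qzero := mkq 0.
Definition qadd (x y : quot) := mkq (val x + val y).
Definition qopp (x : quot) := mkq (- val x).
Definition qscale (a : R) (x : quot) := mkq (a *: val x).

Lemma qaddE u v : qadd (mkq u) (mkq v) = mkq (u + v).
Proof.
apply: mkq_eq.
have -> : val (mkq u) + val (mkq v) - (u + v) = (val (mkq u) - u) + (val (mkq v) - v).
  by rewrite opprD !addrA; congr (_ + _); rewrite -!addrA; congr (_ + _); rewrite addrC.
by apply: SD; apply: val_mkq_S.
Qed.

Lemma qoppE u : qopp (mkq u) = mkq (- u).
Proof. by apply: mkq_eq; rewrite -opprD; apply: SN; apply: val_mkq_S. Qed.

Lemma qscaleE a u : qscale a (mkq u) = mkq (a *: u).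
Proof. by apply: mkq_eq; rewrite -scalerBr; apply: SZ; apply: val_mkq_S. Qed.

Lemma quot_ind (Q : quot -> Prop) : (forall v, Q (mkq v)) -> forall x, Q x.
Proof. by move=> h x; rewrite -(mkq_val x). Qed.

Lemma qaddA : associative qadd.
Proof. by elim/quot_ind => u; elim/quot_ind => v; elim/quot_ind => w; rewrite !qaddE addrA. Qed.
Lemma qaddC : commutative qadd.
Proof. by elim/quot_ind => u; elim/quot_ind => v; rewrite !qaddE addrC. Qed.
Lemma qadd0 : left_id qzero qadd.
Proof. by elim/quot_ind => u; rewrite /qzero qaddE add0r. Qed.
Lemma qaddN : left_inverse qzero qopp qadd.
Proof. by elim/quot_ind => u; rewrite qoppE qaddE addNr. Qed.

HB.instance Definition _ := GRing.isZmodule.Build (quot) qaddA qaddC qadd0 qaddN.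
Lemma addqE u v : (mkq u + mkq v : quot) = mkq (u + v). Proof. exact: qaddE. Qed.

Lemma qscaleA a b v : qscale a (qscale b v) = qscale (a * b) v.
Proof. by elim/quot_ind: v => v; rewrite !qscaleE scalerA. Qed.
Lemma qscale1 : left_id 1 qscale.
Proof. by elim/quot_ind => v; rewrite qscaleE scale1r. Qed.
Lemma qscaleDr : right_distributive qscale +%R.
Proof. move=> a; elim/quot_ind => u; elim/quot_ind => v. by rewrite addqE !qscaleE addqE scalerDr. Qed.

Lemma qscaleDl v : {morph qscale^~ v: a b / a + b}.
Proof. by elim/quot_ind: v => v a b; rewrite /= !qscaleE addqE scalerDl. Qed.

HB.instance Definition _ := GRing.Zmodule_isLmodule.Build R (quot) qscaleA qscale1 qscaleDr qscaleDl.
Lemma scaleqE a u : (a *: mkq u : quot) = mkq (a *: u). Proof. exact: qscaleE. Qed.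

Lemma mkq_linear : linear mkq.
Proof. by move=> a u v; rewrite scaleqE addqE. Qed.

Definition qproj : {linear V -> quot} := mklin mkq_linear.

Lemma qprojE v : qproj v = mkq v. Proof. by []. Qed.

Lemma qproj0 v : qproj v = 0 <-> S v.
Proof.
split; first by move/mkq_eqP; rewrite subr0.
by move=> Sv; apply: mkq_eq; rewrite subr0.
Qed.

Lemma qproj_surj (x : quot) : exists v, qproj v = x.
Proof. by exists (val x); apply: mkq_val. Qed.

Section Fact.
Variables (W : lmodType R) (g : {linear V -> W}).
Hypothesis gS : forall v, S v -> g v = 0.
Lemma gcanon v : g (canon v) = g v.
Proof. by apply/eqP; rewrite -subr_eq0 -linearB; apply/eqP/gS/canonP. Qed.
Definition qfact_fun (x : quot) : W := g (val x).
Lemma qfact_linear : linear qfact_fun.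
Proof.
move=> a; elim/quot_ind => u; elim/quot_ind => v.
rewrite /qfact_fun scaleqE addqE /=.
by rewrite !gcanon linearD linearZ.
Qed.
Definition qfact : {linear quot -> W} := mklin qfact_linear.
Lemma qfactE v : qfact (qproj v) = g v.
Proof. exact: gcanon. Qed.
End Fact.
End Quot.

Section Utils.
Variable R : nzRingType.

Definition imsub_pred (N V : lmodType R) (d : {linear N -> V}) (v : V) : Prop :=
  exists x, v = d x.
Lemma imsub0 (N V : lmodType R) (d : {linear N -> V}) : imsub_pred d 0.
Proof. by exists 0; rewrite linear0. Qed.
Lemma imsubD (N V : lmodType R) (d : {linear N -> V}) x y :
  imsub_pred d x -> imsub_pred d y -> imsub_pred d (x + y).
Proof. by move=> [a ->] [b ->]; exists (a + b); rewrite linearD. Qed.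
Lemma imsubZ (N V : lmodType R) (d : {linear N -> V}) (c : R) x :
  imsub_pred d x -> imsub_pred d (c *: x).
Proof. by move=> [a ->]; exists (c *: a); rewrite linearZ. Qed.
Definition imsub (N V : lmodType R) (d : {linear N -> V}) : submod V :=
  Submod (imsub0 d) (@imsubD _ _ d) (@imsubZ _ _ d).

Definition frfun (W : lmodType R) (k : nat) (w : 'I_k -> W) (x : 'rV[R]_k) : W :=
  \sum_i x 0 i *: w i.
Lemma frfun_linear (W : lmodType R) k (w : 'I_k -> W) : linear (frfun w).
Proof.
move=> a x y; rewrite /frfun scaler_sumr -big_split /=; apply: eq_bigr => i _.
by rewrite !mxE scalerDl scalerA.
Qed.
Definition frmap (W : lmodType R) k (w : 'I_k -> W) : {linear 'rV[R]_k -> W} :=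
  mklin (frfun_linear w).

Lemma lin_frmap (W : lmodType R) k (g : {linear 'rV[R]_k -> W}) x :
  g x = frmap (fun i => g (delta_mx 0 i)) x.
Proof.
rewrite [in LHS](row_sum_delta x) linear_sum /=; rewrite /frfun.
by apply: eq_bigr => i _; rewrite linearZ.
Qed.

Lemma free_lift (Y V : lmodType R) (p : {linear Y -> V}) k (g : {linear 'rV[R]_k -> V}) :
  (forall v, exists y, p y = v) ->
  exists l : {linear 'rV[R]_k -> Y}, forall x, p (l x) = g x.
Proof.
move=> ps.
pose w i := epsilon (inhabits 0) (fun y => p y = g (delta_mx 0 i)).
have wP i : p (w i) = g (delta_mx 0 i).
  by apply: (epsilon_spec (inhabits 0) (fun y => p y = g (delta_mx 0 i))); apply: ps.
exists (frmap w) => x; rewrite (lin_frmap g x) /= /frfun linear_sum.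
by apply: eq_bigr => i _; rewrite linearZ wP.
Qed.

Lemma lin_inv (X M E : lmodType R) (i : {linear M -> E}) (g : {linear X -> E}) :
  injective i -> (forall x, exists m, i m = g x) ->
  exists h : {linear X -> M}, forall x, i (h x) = g x.
Proof.
move=> ii hg.
pose h x := epsilon (inhabits 0) (fun m => i m = g x).
have hP x : i (h x) = g x.
  by apply: (epsilon_spec (inhabits 0) (fun m => i m = g x)); apply: hg.
have hl : linear h.
  by move=> a x y; apply: ii; rewrite linearD linearZ !hP linearD linearZ.
by exists (mklin hl) => x; apply: hP.
Qed.

Lemma surj_fact (Y N E : lmodType R) (p : {linear Y -> N}) (s : {linear Y -> E}) :
  (forall n, exists y, p y = n) -> (forall y, p y = 0 -> s y = 0) ->
  exists sg : {linear N -> E}, forall y, sg (p y) = s y.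
Proof.
move=> ps hs.
pose pr n := epsilon (inhabits 0) (fun y => p y = n).
have prP n : p (pr n) = n.
  by apply: (epsilon_spec (inhabits 0) (fun y => p y = n)); apply: ps.
have key y y' : p y = p y' -> s y = s y'.
  move=> e; apply/eqP; rewrite -subr_eq0 -linearB; apply/eqP/hs.
  by rewrite linearB e subrr.
have hl : linear (fun n => s (pr n)).
  move=> a x y /=; rewrite -linearZ -linearD; apply: key.
  by rewrite prP !linearD !linearZ !prP.
by exists (mklin hl) => y /=; apply: key; rewrite prP.
Qed.

Definition zerof (U V : lmodType R) (_ : U) : V := 0.
Lemma zerof_linear (U V : lmodType R) : linear (@zerof U V).
Proof. by move=> a x y; rewrite /zerof scaler0 addr0. Qed.
Lemma idf_linear (U : lmodType R) : linear (fun x : U => x).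
Proof. by []. Qed.

Lemma fp_rV n : fin_presented 'rV[R]_n.
Proof.
exists 0%N, n, (mklin (@zerof_linear 'rV[R]_0 'rV[R]_n)), (mklin (@idf_linear 'rV[R]_n)).
split => [x|y]; first by exists x.
split => [/= ->|[z <-] //]; by exists 0.
Qed.

Lemma fp_quot (V N : lmodType R) (d : {linear N -> V}) :
  fin_presented V -> fin_presented N -> fin_presented (quot (imsub d)).
Proof.
move=> [m [n [q [p [ps pk]]]]] [m2 [k [q2 [pN [pNs pNk]]]]].
have [l lP] := @free_lift _ _ p k (mklin (fun a x y => (linearP (d \o pN) a x y))) ps.
pose q'f (z : 'rV[R]_(m + k)) := q (lsubmx z) + l (rsubmx z).
have q'l : linear q'f.
  by move=> a x y; rewrite /q'f (linearP lsubmx) (linearP rsubmx) !linearP scalerDr addrACA.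
pose p'f (y : 'rV[R]_n) := qproj (imsub d) (p y).
have p'l : linear p'f by move=> a x y; rewrite /p'f !linearP.
exists (m + k)%N, n, (mklin q'l), (mklin p'l); split.
  move=> x; have [v <-] := qproj_surj x; have [y <-] := ps v; by exists y.
move=> y; rewrite /= /p'f qproj0 /=; split.
- move=> [x e]; have [z2 ez2] := pNs x.
  have : p (y - l z2) = 0 by rewrite linearB lP /= ez2 e subrr.
  move/pk => [z1 ez1]; exists (row_mx z1 z2).
  by rewrite /q'f row_mxKl row_mxKr ez1 subrK.
- move=> [z <-]; exists (pN (rsubmx z)).
  rewrite /q'f linearD lP /=; rewrite (_ : p (q (lsubmx z)) = 0) ?add0r //.
  by apply/pk; exists (lsubmx z).
Qed.

End Utils.

Section Coh.
Variable R : nzRingType.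

Lemma mx11_0 (M : 'M[R]_1) : M = 0 <-> M 0 0 = 0.
Proof.
split=> [->|h]; first by rewrite mxE.
by apply/matrixP => i j; rewrite !ord1 h mxE.
Qed.

Lemma fin_choice_mx n k (P : 'I_n -> 'rV[R]_k -> Prop) :
  (forall i, exists r, P i r) -> exists A : 'M[R]_(n, k), forall i, P i (row i A).
Proof.
move=> h; pose f i := epsilon (inhabits 0) (P i).
have fP i : P i (f i) by apply: (epsilon_spec (inhabits 0) (P i)); apply: h.
exists (\matrix_(i, l) f i 0 l) => i.
by rewrite (_ : row i _ = f i) //; apply/rowP => l; rewrite !mxE.
Qed.

Lemma coh_col : left_coherent R -> forall k (c : 'cV[R]_k),
  exists k' (D : 'M[R]_(k', k)), forall x : 'rV_k, x *m c = 0 <-> exists z, x = z *m D.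
Proof.
move=> Hcoh k c.
have [V [j [ji [jim [m' [n' [q' [p [ps pk]]]]]]]]] := Hcoh k (fun i => c i 0).
pose Psi : 'cV[R]_n' := \col_i (j (p (delta_mx 0 i)) : R).
have psiE y : (j (p y) : R) = (y *m Psi) 0 0.
  rewrite {1}(row_sum_delta y) !linear_sum mxE /=.
  by apply: eq_bigr => i _; rewrite !linearZ /= mxE.
pose Q' := lin1_mx q'.
have ker (y : 'rV[R]_n') : y *m Psi = 0 <-> exists z, y = z *m Q'.
  split.
  - move=> h0; have := proj1 (mx11_0 _) h0; rewrite -psiE => h; have : p y = 0 by apply: ji; rewrite h linear0.
    by move/pk => [z <-]; exists z; rewrite mul_rV_lin1.
  - move=> [z ->]; apply: (proj2 (mx11_0 _)); rewrite -psiE mul_rV_lin1.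
    have -> : p (q' z) = 0 by apply/pk; exists z.
    by rewrite !linear0.
have [A AP] : exists A : 'M[R]_(n', k), forall i, Psi i 0 = (row i A *m c) 0 0.
  apply: (fin_choice_mx (P := fun i r => Psi i 0 = (r *m c) 0 0)) => i.
  have [r er] := (proj1 (jim (Psi i 0))) (ex_intro _ _ (esym (mxE _ _ _ _))).
  exists (\row_l r l); rewrite er mxE; apply: eq_bigr => l _; by rewrite mxE.
have Ac : A *m c = Psi.
  by apply/matrixP => i l; rewrite ord1 (AP i) -row_mul !mxE.
have [B BP] : exists B : 'M[R]_(k, n'), forall i, c i 0 = (row i B *m Psi) 0 0.
  apply: (fin_choice_mx (P := fun i y => c i 0 = (y *m Psi) 0 0)) => i.
  have [v ev] : exists v, j v = c i 0.
    apply: (proj2 (jim (c i 0))).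
    exists (fun l => (l == i)%:R); rewrite (bigD1 i) //= big1 => [|l /negbTE ->].
      by rewrite eqxx mul1r addr0.
    by rewrite mul0r.
  have [y ey] := ps v; exists y; by rewrite -psiE ey ev.
have Bc : B *m Psi = c.
  by apply/matrixP => i l; rewrite ord1 (BP i) -row_mul !mxE.
exists (k + m')%N, (col_mx (1%:M - B *m A) (Q' *m A)) => x; split.
- move=> hx; have : (x *m B) *m Psi = 0 by rewrite -mulmxA Bc.
  move/ker => [z ez]; exists (row_mx x z).
  by rewrite mul_row_col mulmxBr mulmx1 !mulmxA -ez subrK.
- move=> [z ->]; rewrite -[z]hsubmxK mul_row_col mulmxDl mulmxBr mulmx1 mulmxBl -!mulmxA Ac Bc subrr add0r.
  by rewrite mulmxA; apply/ker; exists (rsubmx z).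
Qed.

Lemma coh_mx : left_coherent R -> forall n m (Q : 'M[R]_(m, n)),
  exists k (D : 'M[R]_(k, m)), forall x : 'rV_m, x *m Q = 0 <-> exists z, x = z *m D.
Proof.
move=> Hcoh; elim=> [|n IH] m Q.
  exists m, 1%:M => x; split => [_|_]; first by exists x; rewrite mulmx1.
  by apply/matrixP => i [].
have [k1 [D1 hD1]] := IH m (rsubmx (Q : 'M_(m, 1 + n))).
have [k2 [D2 hD2]] := coh_col Hcoh (D1 *m lsubmx (Q : 'M_(m, 1 + n))).
have split0 (x : 'rV[R]_m) : x *m Q = 0 <->
   x *m lsubmx (Q : 'M_(m, 1 + n)) = 0 /\ x *m rsubmx (Q : 'M_(m, 1 + n)) = 0.
  have -> : x *m Q = row_mx (x *m lsubmx (Q : 'M_(m, 1 + n))) (x *m rsubmx (Q : 'M_(m, 1 + n))).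
    by rewrite -mul_mx_row hsubmxK.
  split=> [h|[-> ->]]; last by rewrite row_mx0.
  have e1 := congr1 (@lsubmx _ 1 1 n) h; have e2 := congr1 (@rsubmx _ 1 1 n) h.
  rewrite row_mxKl in e1; rewrite row_mxKr in e2.
  by split; [rewrite e1 | rewrite e2]; apply/matrixP => i j; rewrite !mxE.
exists k2, (D2 *m D1) => x; split.
- move/split0 => [hl hr]; have [z ez] := proj1 (hD1 x) hr.
  have hz : z *m (D1 *m lsubmx (Q : 'M_(m, 1 + n))) = 0 by rewrite mulmxA -ez.
  have [w ew] := proj1 (hD2 z) hz.
  by exists w; rewrite ez ew mulmxA.
- move=> [w ->]; apply/split0; split.
  + by rewrite mulmxA -[_ *m D1 *m _]mulmxA; apply: (proj2 (hD2 _)); exists w.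
  + by rewrite mulmxA; apply: (proj2 (hD1 _)); exists (w *m D2).
Qed.
End Coh.

Section Main.
Variables (R : nzRingType) (M : lmodType R).

Lemma inj_of_ker (U V : lmodType R) (i : {linear U -> V}) :
  (forall u, i u = 0 -> u = 0) -> injective i.
Proof.
move=> h x y e; apply/eqP; rewrite -subr_eq0; apply/eqP/h.
by rewrite linearB e subrr.
Qed.

Lemma qproj_eq (V : lmodType R) (P : submod V) x y :
  sm_pred P (x - y) -> qproj P x = qproj P y.
Proof. exact: mkq_eq. Qed.

Lemma cogen_back : fp_cogenerator M -> forall G : fp_functor R, ev_zero G M -> defect_zero G.
Proof.
move=> hc [A B fpA fpB alpha] hev x /= hx.
pose F (r : 'rV[R]_1) := r 0 0 *: x.
have Fl : linear F by move=> a u v; rewrite /F !mxE scalerDl scalerA.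
have := hc _ _ (fp_rV R 1) fpA (mklin Fl) (mklin (@zerof_linear R 'rV[R]_1 A)).
move=> /(_ _ (const_mx 1)) /=; rewrite /F /zerof mxE scale1r; apply.
move=> g r /=; rewrite linear0 linearZ.
have [g' eg] := hev g; rewrite /= in eg.
by rewrite eg hx linear0; apply: scaler0.
Qed.

Lemma cogen_fwd : (forall G : fp_functor R, ev_zero G M -> defect_zero G) -> fp_cogenerator M.
Proof.
move=> hG N N' fpN fpN' f f' hf x.
have dl : linear (fun x => f x - f' x).
  by move=> a u v; rewrite (linearP f) (linearP f') opprD scalerBr addrACA.
pose d := mklin dl.
pose G := FpFunctor fpN' (fp_quot d fpN' fpN) (qproj (imsub d)).
have hd : defect_zero G.
  apply: hG => g /=.
  have gS : forall v, sm_pred (imsub d) v -> g v = 0.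
    by move=> v [u ->]; rewrite /= linearB hf subrr.
  by exists (qfact gS) => y; rewrite qfactE.
apply/eqP; rewrite -subr_eq0; apply/eqP; apply: hd => /=.
by apply/qproj0; exists x.
Qed.

Lemma part1_back : fp_injective M -> forall G : fp_functor R, defect_zero G -> ev_zero G M.
Proof.
move=> hinj [A B fpA fpB alpha] hd f /=; rewrite /defect_zero /= in hd.
pose df (a : A) : M * B := (f a, - alpha a).
have dl : linear df.
  by move=> c u v; rewrite /df (linearP f) (linearP alpha) opprD -scalerN.
pose dd := mklin dl; pose SE := imsub dd; pose SC := imsub alpha.
have Cfp := fp_quot alpha fpB fpA.
have il : linear (fun m : M => qproj SE (m, 0)).
  by move=> c u v; rewrite -linearP /=; congr mkq; apply: injective_projections => /=; rewrite ?scaler0 ?addr0.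
pose i := mklin il.
have pBl : linear (fun x : M * B => qproj SC x.2).
  by move=> c u v; rewrite -linearP.
pose pB := mklin pBl.
have pBS : forall x, sm_pred SE x -> pB x = 0.
  move=> x [a ->]; apply/qproj0; exists (- a); by rewrite linearN.
pose p := qfact pBS.
have [r rP] : exists r : {linear quot SE -> M}, forall m, r (i m) = m.
  apply: (hinj _ Cfp _ i p).
- apply: inj_of_ker => m /qproj0 [a [e1 e2]].
  have ha : alpha a = 0 by apply/eqP; rewrite -oppr_eq0 -e2.
  by rewrite e1 (hd _ ha) linear0.
- move=> x; have [b <-] := qproj_surj x; exists (qproj SE (0, b)); by rewrite qfactE.
- move=> e; have [[m b] <-] := qproj_surj e; rewrite qfactE /=; split.
  + move/qproj0 => [a eb]; exists (m + f a); apply: qproj_eq; exists a.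
    by rewrite /= eb; congr (_, _); [rewrite addrAC subrr add0r | rewrite sub0r].
  + move=> [m' e']. have : qproj SE (m', 0) = qproj SE (m, b) by [].
    by move/mkq_eqP => [a [e1 e2]]; apply/qproj0; exists a; apply/eqP; rewrite -eqr_opp -e2 sub0r.
have hl : linear (fun b : B => r (qproj SE (0, b))).
  by move=> c u v; rewrite -linearP -linearP /=; congr (r (mkq _ _)); apply: injective_projections => /=; rewrite ?scaler0 ?addr0.
exists (mklin hl) => a /=.
rewrite -{1}(rP (f a)) /=; congr (r _); apply: qproj_eq; exists a.
by apply: injective_projections => /=; rewrite ?subr0 ?sub0r.
Qed.
Lemma part1_fwd : left_coherent R ->
  (forall G : fp_functor R, defect_zero G -> ev_zero G M) -> fp_injective M.
Proof.
move=> Hcoh hG N [m [n [q [p0 [p0s p0k]]]]] E i p ii ps pk.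
have [k [D hD]] := coh_mx Hcoh (lin1_mx q).
have dlin : linear (fun z : 'rV[R]_k => z *m D).
  by move=> c u v; rewrite mulmxDl scalemxAl.
pose dl := mklin dlin.
have kerq x : q x = 0 <-> exists z, x = dl z.
  by rewrite -mul_rV_lin1; apply: hD.
pose K := quot (imsub dl).
have Kfp := fp_quot dl (fp_rV R m) (fp_rV R k).
have qS : forall v, sm_pred (imsub dl) v -> q v = 0.
  by move=> v [z ->]; apply/kerq; exists z.
pose alpha := qfact qS.
pose G := FpFunctor Kfp (fp_rV R n) alpha.
have hd : defect_zero G.
  move=> x; have [v <-] := qproj_surj x.
  change (alpha (qproj (imsub dl) v) = 0 -> qproj (imsub dl) v = 0); rewrite qfactE => /kerq hv.
  by apply/qproj0.
have hev := hG G hd; rewrite /ev_zero /= in hev.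
have [s sP] := @free_lift R _ _ p n p0 ps.
have tex : forall x : K, exists mm, i mm = s (alpha x).
  move=> x; have [v <-] := qproj_surj x; apply/pk; rewrite qfactE sP.
  by apply/p0k; exists v.
have [t tP] := @lin_inv R _ _ _ i (mklin (fun a x y => linearP (s \o alpha) a x y)) ii tex.
have [h hP] := hev t.
have s'l : linear (fun y => s y - i (h y)).
  by move=> c u v; rewrite (linearP s) (linearP h) (linearP i) opprD scalerBr addrACA.
have [sg sgP] : exists sg : {linear N -> E}, forall y, sg (p0 y) = s y - i (h y).
  apply: (@surj_fact R _ _ _ p0 (mklin s'l) p0s).
  move=> y /p0k [z <-] /=.
  have -> : q z = alpha (qproj (imsub dl) z) by rewrite qfactE.
  by rewrite -hP tP subrr.
have pi0 : forall mm, p (i mm) = 0 := fun mm => proj2 (pk _) (ex_intro _ mm erefl).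
have rex : forall e, exists mm, i mm = e - sg (p e).
  move=> e; apply/pk; rewrite linearB.
  have [y ey] := p0s (p e).
  by rewrite -ey sgP (linearB p) sP pi0 subr0 subrr.
have rl : linear (fun e : E => e - sg (p e)).
  by move=> c u v; rewrite (linearP p) (linearP sg) opprD scalerBr addrACA.
have [r rP] := @lin_inv R _ _ _ i (mklin rl) ii rex.
exists r => mm; apply: ii; rewrite rP /=.
by rewrite pi0 linear0 subr0.
Qed.
End Main.

Theorem mainTheorem9 (R : nzRingType) (M : lmodType R) :
  left_coherent R ->
  ((forall G : fp_functor R, defect_zero G -> ev_zero G M) <-> fp_injective M) /\
  ((forall G : fp_functor R, defect_zero G <-> ev_zero G M) <->
     fp_injective M /\ fp_cogenerator M).
Proof.
move=> Hcoh; split; first by split; [apply: part1_fwd | apply: part1_back].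
split.
- move=> h; split.
    by apply: part1_fwd => // G; move/(h G).
  by apply: cogen_fwd => G; move/(h G).
- move=> [hi hc] G; split; first exact: part1_back.
  exact: cogen_back.
Qed.
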